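(* Let $n\equiv 3\pmod 4$ with $n>3$. Let $1\le r\le m$, let $M_r\in\mathfrak{C}_r$, and suppose $\det\tilde M_r>0$. If $E_m^*\in\mathfrak{E}_m$ satisfies $\det E_m^*=\max\{\det E: E\in\mathfrak{E}_m\}$, then $\det\tilde E_m^*>0$.
   Context: Fix an integer $n\equiv 3\pmod 4$, $n>3$. For $m\ge1$, $\mathfrak{C}_m$ is the set of symmetric positive definite $m\times m$ integer matrices $C=(c_{ij})$ with $c_{ii}=n$ and $c_{ij}\equiv n\pmod 4$ for all $i,j$. Given a fixed $M_r\in\mathfrak{C}_r$, for $m\ge r$, $\mathfrak{E}_m$ is the set of $E_m\in\mathfrak{C}_m$ whose leading $r\times r$ submatrix is $M_r$. For a square matrix $C$ of order $m$, $\tilde C$ denotes the matrix obtained from $C$ by replacing its $(m,m)$ entry by $3$. *)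

(* Defs.v *)
From HB Require Import structures.
From mathcomp Require Import all_boot all_order all_algebra.
From Stdlib Require Rdefinitions.
From mathcomp Require Import Rstruct.
Set Implicit Arguments. Unset Strict Implicit. Unset Printing Implicit Defensive.
Import Order.TTheory GRing.Theory Num.Theory.
Local Open Scope ring_scope.

Definition posdef (m : nat) (C : 'M[int]_m) : Prop :=
  forall x : 'cV[Rdefinitions.R]_m, x != 0 ->
    0 < (x^T *m map_mx (fun z : int => z%:~R : Rdefinitions.R) C *m x) 0 0.

Definition inCm (n m : nat) (C : 'M[int]_m) : Prop :=
  [/\ C^T = C, posdef C,
      forall i : 'I_m, C i i = n%:Z &
      forall i j : 'I_m, modz (C i j) 4 = modz n%:Z 4].

Definition leading (r m : nat) (M : 'M[int]_r) (E : 'M[int]_m) : Prop :=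
  forall (i j : 'I_r) (i' j' : 'I_m),
    val i = val i' -> val j = val j' -> E i' j' = M i j.

Definition inEm (n r m : nat) (M : 'M[int]_r) (E : 'M[int]_m) : Prop :=
  inCm n E /\ leading M E.

Definition tilde (m : nat) (C : 'M[int]_m) : 'M[int]_m :=
  \matrix_(i, j) if (val i == m.-1) && (val j == m.-1) then 3 else C i j.

(* Main.v *)
Require Import Defs.
From HB Require Import structures.
From mathcomp Require Import all_boot all_order all_algebra.
From mathcomp Require Import ring lra zify.
From mathcomp Require Import Rstruct.
Set Implicit Arguments. Unset Strict Implicit. Unset Printing Implicit Defensive.
Import Order.TTheory GRing.Theory Num.Theory.
Local Open Scope ring_scope.

Section Gen.
Variable R : realFieldType.

Definition qf k (A : 'M[R]_k) (x : 'cV[R]_k) := (x^T *m A *m x) 0 0.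
Definition pd k (A : 'M[R]_k) := forall x : 'cV[R]_k, x != 0 -> 0 < qf A x.
Definition sub k (A : 'M[R]_k.+1) : 'M[R]_k := row' ord_max (col' ord_max A).

Lemma subE k (B : 'M[R]_k.+1) i j : sub B i j = B (lift ord_max i) (lift ord_max j).
Proof. by rewrite /sub !mxE. Qed.

Lemma qfE k (A : 'M[R]_k) x : qf A x = \sum_i \sum_j x i 0 * A i j * x j 0.
Proof.
rewrite /qf mxE exchange_big /=; apply: eq_bigr => i _.
rewrite mxE big_distrl /=; apply: eq_bigr => j _; by rewrite !mxE.
Qed.

Lemma sumS k (f : 'I_k.+1 -> R) : \sum_i f i = \sum_(i < k) f (lift ord_max i) + f ord_max.
Proof.
rewrite big_ord_recr; congr (_ + _); apply: eq_bigr => i _; congr f.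
by apply: val_inj => /=; rewrite /bump leqNgt ltn_ord.
Qed.

Lemma qf_split k (A : 'M[R]_k.+1) x : (forall i j, A i j = A j i) ->
  qf A x = qf (sub A) (row' ord_max x)
    + 2 * x ord_max 0 * \sum_i A (lift ord_max i) ord_max * x (lift ord_max i) 0
    + A ord_max ord_max * x ord_max 0 ^+ 2.
Proof.
move=> sA; rewrite !qfE sumS.
under eq_bigr do rewrite sumS.
rewrite sumS big_split /= -!addrA; congr (_ + _).
  by apply: eq_bigr => i _; apply: eq_bigr => j _; rewrite !mxE.
rewrite big_distrr /= addrA -big_split /=; congr (_ + _); last by ring.
by apply: eq_bigr => i _; rewrite (sA ord_max); ring.
Qed.


Lemma qf0 k (A : 'M[R]_k) : qf A 0 = 0.
Proof. by rewrite /qf mulmx0 mxE. Qed.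

Lemma pd_ge0 k (A : 'M[R]_k) x : pd A -> 0 <= qf A x.
Proof.
move=> pA; have [->|nz] := eqVneq x 0; first by rewrite qf0.
exact/ltW/pA.
Qed.

Lemma cV_split k (z : 'cV[R]_k.+1) : row' ord_max z = 0 -> z ord_max 0 = 0 -> z = 0.
Proof.
move=> h1 h2; apply/matrixP => i j; rewrite (ord1 j) mxE.
case: (unliftP ord_max i) => [i'|] ->; last by [].
by have := congr1 (fun M : 'M[R]_(k,1) => M i' 0) h1; rewrite !mxE.
Qed.

Lemma liftN k (j : 'I_k) : (lift ord_max j == ord_max :> 'I_k.+1) = false.
Proof. by rewrite eq_sym (negbTE (neq_lift _ _)). Qed.

Section Schur.
Variables (k : nat) (A : 'M[R]_k.+1).
Hypothesis sA : forall i j, A i j = A j i.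
Let F := sub A.
Hypothesis uF : F \in unitmx.
Let v : 'cV[R]_k := \col_i A (lift ord_max i) ord_max.
Let w := invmx F *m v.
Definition schur_s := A ord_max ord_max - (v^T *m w) 0 0.
Let s := schur_s.
Let W : 'M[R]_k.+1 := \matrix_(i, j) if j == ord_max then
   (if unlift ord_max i is Some i' then - w i' 0 else 0) else 0.
Definition schurU := 1%:M + W.
Let U := schurU.

Lemma Wmax j : W ord_max j = 0.
Proof. by rewrite mxE unlift_none; case: ifP. Qed.

Lemma Wlift i j : W i (lift ord_max j) = 0.
Proof. by rewrite mxE liftN. Qed.

Lemma WliftM i : W (lift ord_max i) ord_max = - w i 0.
Proof. by rewrite mxE eqxx liftK. Qed.

Lemma detU : \det U = 1.
Proof.
rewrite (expand_det_row _ ord_max) sumS big1 ?add0r; last first.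
  by move=> j _; rewrite !mxE liftN (negbTE (neq_lift _ _)) addr0 mul0r.
rewrite !mxE eqxx unlift_none addr0 mul1r /cofactor addnn -mul2n exprM sqrrN !expr1n mul1r.
suff -> : row' ord_max (col' ord_max U) = 1%:M by rewrite det1.
apply/matrixP => i j; by rewrite !mxE liftN (inj_eq lift_inj) addr0.
Qed.

Lemma AUlift i j : (A *m U) i (lift ord_max j) = A i (lift ord_max j).
Proof. by rewrite mulmxDr mulmx1 mxE [X in _ + X = _]mxE big1 ?addr0 // => l _; rewrite Wlift mulr0. Qed.

Lemma AUmax i : (A *m U) i ord_max = A i ord_max - \sum_l A i (lift ord_max l) * w l 0.
Proof.
rewrite mulmxDr mulmx1 mxE [X in _ + X = _]mxE sumS Wmax mulr0 addr0.
by rewrite -sumrN; congr (_ + _); apply: eq_bigr => l _; rewrite WliftM mulrN.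
Qed.

Lemma Fw : F *m w = v.
Proof. by rewrite /w mulmxA mulmxV // mul1mx. Qed.

Lemma AUliftmax i : (A *m U) (lift ord_max i) ord_max = 0.
Proof.
rewrite AUmax; apply/eqP; rewrite subr_eq0; apply/eqP.
have := congr1 (fun M : 'M[R]_(k,1) => M i 0) Fw; rewrite !mxE => <-.
by apply: eq_bigr => l _; rewrite !mxE.
Qed.

Lemma AUmaxmax : (A *m U) ord_max ord_max = s.
Proof.
rewrite AUmax /s /schur_s; congr (_ - _); rewrite mxE; apply: eq_bigr => l _.
by rewrite !mxE sA.
Qed.

Lemma schur_det : \det A = \det F * s.
Proof.
have := det_mulmx A U; rewrite detU mulr1 => <-.
rewrite (expand_det_col _ ord_max) sumS big1 ?add0r; last first.
  by move=> i _; rewrite AUliftmax mul0r.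
rewrite AUmaxmax mulrC /cofactor addnn -mul2n exprM sqrrN !expr1n mul1r.
congr (_ * _); congr (\det _); apply/matrixP => i j.
change (sub (A *m U) i j = sub A i j); by rewrite !subE AUlift.
Qed.

Let D := U^T *m (A *m U).

Lemma Dsym i j : D i j = D j i.
Proof.
have AT : A^T = A by apply/matrixP => a b; rewrite mxE sA.
have : D^T = D by rewrite /D !trmx_mul trmxK AT mulmxA.
by move/matrixP => /(_ j i); rewrite mxE.
Qed.

Lemma Dlift i j : D (lift ord_max i) j = (A *m U) (lift ord_max i) j.
Proof.
rewrite /D; set B := A *m U.
rewrite /U /schurU raddfD /= trmx1 mulmxDl mul1mx mxE [X in _ + X = _]mxE big1 ?addr0 //.
by move=> l _; rewrite mxE Wlift mul0r.
Qed.

Lemma Dmaxmax : D ord_max ord_max = s.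
Proof.
rewrite /D; set B := A *m U.
rewrite /U /schurU raddfD /= trmx1 mulmxDl mul1mx mxE [X in _ + X = _]mxE sumS.
rewrite big1 ?add0r; first by rewrite [W^T _ _]mxE Wmax mul0r addr0 /B AUmaxmax.
by move=> l _; rewrite /B AUliftmax mulr0.
Qed.

Lemma schur_qf z : qf A (U *m z) = qf F (row' ord_max z) + s * z ord_max 0 ^+ 2.
Proof.
have -> : qf A (U *m z) = qf D z by rewrite /qf /D trmx_mul !mulmxA.
rewrite qf_split; last exact: Dsym.
rewrite big1 ?mulr0 ?addr0; last by move=> i _; rewrite Dlift AUliftmax mul0r.
rewrite Dmaxmax; congr (qf _ _ + _); apply/matrixP => i j; by rewrite /F !subE Dlift AUlift.
Qed.

Lemma U_unit : U \in unitmx.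
Proof. by rewrite unitmxE detU unitr1. Qed.

End Schur.


Lemma sq_gt0 (a : R) : a != 0 -> 0 < a ^+ 2.
Proof. by move=> h; rewrite lt_def sqr_ge0 andbT sqrf_eq0. Qed.

Lemma sub_sym k (A : 'M[R]_k.+1) : (forall i j, A i j = A j i) ->
  forall i j, sub A i j = sub A j i.
Proof. by move=> sA i j; rewrite !subE sA. Qed.

Definition extv k (y : 'cV[R]_k) : 'cV[R]_k.+1 :=
  \col_i (if unlift ord_max i is Some i' then y i' 0 else 0).

Lemma extv_row k (y : 'cV[R]_k) : row' ord_max (extv y) = y.
Proof. by apply/matrixP => i j; rewrite !mxE liftK (ord1 j). Qed.

Lemma extv_max k (y : 'cV[R]_k) : extv y ord_max 0 = 0.
Proof. by rewrite mxE unlift_none. Qed.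

Lemma pd_sub k (A : 'M[R]_k.+1) : (forall i j, A i j = A j i) -> pd A -> pd (sub A).
Proof.
move=> sA pA y ny.
have nx : extv y != 0.
  by apply: contraNneq ny => h; rewrite -(extv_row y) h; apply/eqP/matrixP => i j; rewrite !mxE.
have := pA _ nx; rewrite qf_split // extv_row extv_max.
by rewrite mulr0 mul0r addr0 expr0n /= mulr0 addr0.
Qed.

Lemma pd_det k (A : 'M[R]_k) : (forall i j, A i j = A j i) -> pd A -> 0 < \det A.
Proof.
elim: k A => [|k IH] A sA pA; first by rewrite det_mx00.
have dF : 0 < \det (sub A) by apply: IH; [exact: sub_sym | exact: pd_sub].
have uF : sub A \in unitmx by rewrite unitmxE unitfE lt0r_neq0.
rewrite (schur_det sA uF) pmulr_rgt0 //.
pose z : 'cV[R]_k.+1 := \col_i (i == ord_max)%:R.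
have nz : schurU A *m z != 0.
  apply/negP => /eqP h.
  have : z = 0 by rewrite -(mulKmx (U_unit A) z) h mulmx0.
  by move/matrixP => /(_ ord_max 0); rewrite !mxE eqxx => /eqP; rewrite oner_eq0.
have := pA _ nz; rewrite (schur_qf sA uF).
have -> : row' ord_max z = 0 by apply/matrixP => i j; rewrite !mxE liftN.
by rewrite qf0 add0r mxE eqxx expr1n mulr1.
Qed.

Lemma pd_of_det k (A : 'M[R]_k.+1) : (forall i j, A i j = A j i) ->
  pd (sub A) -> 0 < \det A -> pd A.
Proof.
move=> sA pF dA.
have dF : 0 < \det (sub A) by apply: pd_det => //; exact: sub_sym.
have uF : sub A \in unitmx by rewrite unitmxE unitfE lt0r_neq0.
have sp : 0 < schur_s A by move: dA; rewrite (schur_det sA uF) pmulr_rgt0.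
move=> x nx.
pose z := invmx (schurU A) *m x.
have xE : x = schurU A *m z by rewrite /z mulmxA mulmxV ?mul1mx // U_unit.
have nz : z != 0 by apply: contraNneq nx => h; rewrite xE h mulmx0.
rewrite xE (schur_qf sA uF).
have [h0|h1] := eqVneq (row' ord_max z) 0.
  have zm : z ord_max 0 != 0 by apply: contraNneq nz => h; apply/eqP; exact: (cV_split h0 h).
  by rewrite h0 qf0 add0r mulr_gt0 // sq_gt0.
by apply: ltr_pwDl; [exact: pF | rewrite mulr_ge0 ?sqr_ge0 // ltW].
Qed.


Lemma ext_qf k (B : 'M[R]_k.+2) (Gt : 'M[R]_k.+1) (c : R) :
  (forall i j, B i j = B j i) -> (forall i j, Gt i j = Gt j i) ->
  (forall a b, B (lift ord_max (lift ord_max a)) (lift ord_max (lift ord_max b))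
      = Gt (lift ord_max a) (lift ord_max b)) ->
  (forall a, B (lift ord_max (lift ord_max a)) ord_max = Gt (lift ord_max a) ord_max) ->
  (forall a, B (lift ord_max (lift ord_max a)) (lift ord_max ord_max)
      = Gt (lift ord_max a) ord_max) ->
  B (lift ord_max ord_max) ord_max = Gt ord_max ord_max ->
  B ord_max ord_max = Gt ord_max ord_max ->
  B (lift ord_max ord_max) (lift ord_max ord_max) = Gt ord_max ord_max + c ->
  forall x, qf B x = qf Gt (row' ord_max x + x ord_max 0 *: \col_i (i == ord_max)%:R)
     + c * x (lift ord_max ord_max) 0 ^+ 2.
Proof.
move=> sB sG h1 h2 h3 h4 h5 h6 x.
rewrite qf_split // qf_split; last exact: sub_sym.
rewrite [in RHS]qf_split //.
have -> : sub (sub B) = sub Gt by apply/matrixP => a b; rewrite !subE h1.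
have -> : row' ord_max (row' ord_max x + x ord_max 0 *: \col_i (i == ord_max)%:R)
   = row' ord_max (row' ord_max x).
  by apply/matrixP => a b; rewrite !mxE liftN mulr0 addr0.
rewrite sumS h4 !mxE eqxx mulr1 h5.
pose S := \sum_(i < k) Gt (lift ord_max i) ord_max * x (lift ord_max (lift ord_max i)) 0.
have -> : \sum_i sub B (lift ord_max i) ord_max * row' ord_max x (lift ord_max i) 0 = S.
  by apply: eq_bigr => a _; rewrite !subE !mxE h3.
have -> : \sum_(i < k) B (lift ord_max (lift ord_max i)) ord_max *
      x (lift ord_max (lift ord_max i)) 0 = S.
  by apply: eq_bigr => a _; rewrite h2.
have -> : \sum_i Gt (lift ord_max i) ord_max *
     (row' ord_max x + x ord_max 0 *: \col_i0 (i0 == ord_max)%:R) (lift ord_max i) 0 = S.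
  by apply: eq_bigr => a _; rewrite !mxE liftN mulr0 addr0.
rewrite h6; ring.
Qed.


Lemma pd_ext k (B : 'M[R]_k.+2) (Gt : 'M[R]_k.+1) (c : R) :
  (forall i j, B i j = B j i) -> (forall i j, Gt i j = Gt j i) ->
  (forall a b, B (lift ord_max (lift ord_max a)) (lift ord_max (lift ord_max b))
      = Gt (lift ord_max a) (lift ord_max b)) ->
  (forall a, B (lift ord_max (lift ord_max a)) ord_max = Gt (lift ord_max a) ord_max) ->
  (forall a, B (lift ord_max (lift ord_max a)) (lift ord_max ord_max)
      = Gt (lift ord_max a) ord_max) ->
  B (lift ord_max ord_max) ord_max = Gt ord_max ord_max ->
  B ord_max ord_max = Gt ord_max ord_max ->
  B (lift ord_max ord_max) (lift ord_max ord_max) = Gt ord_max ord_max + c ->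
  pd Gt -> 0 < c -> pd B.
Proof.
move=> sB sG h1 h2 h3 h4 h5 h6 pG c0 x nx.
rewrite (ext_qf sB sG h1 h2 h3 h4 h5 h6).
set z := (row' ord_max x + _).
have [z0|zn] := eqVneq z 0; last first.
  by apply: ltr_pwDl; [exact: pG | rewrite mulr_ge0 ?sqr_ge0 // ltW].
rewrite z0 qf0 add0r mulr_gt0 // sq_gt0 //.
apply: contraNneq nx => y0.
have zm := congr1 (fun M : 'M[R]_(k.+1,1) => M ord_max 0) z0.
rewrite /= /z !mxE eqxx mulr1 y0 add0r in zm.
have zr : row' ord_max (row' ord_max x) = 0.
  apply/matrixP => a b; have := congr1 (fun M : 'M[R]_(k.+1,1) => M (lift ord_max a) b) z0.
  by rewrite /= /z !mxE liftN mulr0 addr0.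
apply/eqP; apply: cV_split zm; apply: cV_split zr _.
by rewrite mxE.
Qed.
End Gen.

Notation RR := Rdefinitions.R.
Definition rmx k (C : 'M[int]_k) : 'M[RR]_k := map_mx (fun z : int => z%:~R) C.

Lemma det_rmx k (C : 'M[int]_k) : \det (rmx C) = (\det C)%:~R.
Proof. by rewrite /rmx (det_map_mx (GRing.RMorphism.clone _ _ (intmul (1:RR)) _)). Qed.

Lemma posdefE k (C : 'M[int]_k) : posdef C <-> pd (rmx C).
Proof. by []. Qed.

Definition subZ k (C : 'M[int]_k.+1) : 'M[int]_k := row' ord_max (col' ord_max C).

Lemma subZE k (C : 'M[int]_k.+1) i j : subZ C i j = C (lift ord_max i) (lift ord_max j).
Proof. by rewrite /subZ !mxE. Qed.

Lemma rmxE k (C : 'M[int]_k) i j : rmx C i j = (C i j)%:~R.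
Proof. by rewrite mxE. Qed.

Lemma rmx_sub k (C : 'M[int]_k.+1) : rmx (subZ C) = sub (rmx C).
Proof. by apply/matrixP => i j; rewrite subE !rmxE subZE. Qed.

Lemma symP k (C : 'M[int]_k) : C^T = C -> forall i j, C i j = C j i.
Proof. by move/matrixP => h i j; rewrite -[LHS]h mxE. Qed.

Lemma rmx_sym k (C : 'M[int]_k) : (forall i j, C i j = C j i) ->
  forall i j, rmx C i j = rmx C j i.
Proof. by move=> h i j; rewrite !rmxE h. Qed.

Lemma liftval k (a : 'I_k) : (nat_of_ord (lift (@ord_max k) a) == k) = false.
Proof. by rewrite /= /bump leqNgt ltn_ord add0n ltn_eqF. Qed.

Lemma tilde_liftl k (C : 'M[int]_k.+1) a j : tilde C (lift ord_max a) j = C (lift ord_max a) j.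
Proof. by rewrite mxE /= liftval. Qed.

Lemma tilde_liftr k (C : 'M[int]_k.+1) i b : tilde C i (lift ord_max b) = C i (lift ord_max b).
Proof. by rewrite mxE /= liftval andbF. Qed.

Lemma tilde_mm k (C : 'M[int]_k.+1) : tilde C ord_max ord_max = 3.
Proof. by rewrite mxE /= eqxx. Qed.

Lemma tilde_sym k (C : 'M[int]_k) : (forall i j, C i j = C j i) ->
  forall i j, tilde C i j = tilde C j i.
Proof. by move=> h i j; rewrite !mxE andbC h. Qed.

Lemma subZ_tilde k (C : 'M[int]_k.+1) : subZ (tilde C) = subZ C.
Proof. by apply/matrixP => i j; rewrite !subZE tilde_liftl. Qed.

Lemma sumSZ k (f : 'I_k.+1 -> int) : \sum_i f i = \sum_(i < k) f (lift ord_max i) + f ord_max.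
Proof.
rewrite big_ord_recr; congr (_ + _); apply: eq_bigr => i _; congr f.
by apply: val_inj => /=; rewrite /bump leqNgt ltn_ord.
Qed.

Lemma det_tilde k (C : 'M[int]_k.+1) :
  \det C = \det (tilde C) + (C ord_max ord_max - 3) * \det (subZ C).
Proof.
rewrite (expand_det_row C ord_max) (expand_det_row (tilde C) ord_max) !sumSZ.
have ec : forall j, cofactor C ord_max j = cofactor (tilde C) ord_max j.
  move=> j; rewrite /cofactor; congr (_ * \det _).
  by apply/matrixP => a b; rewrite !mxE /= liftval.
have -> : \sum_(i < k) C ord_max (lift ord_max i) * cofactor C ord_max (lift ord_max i)
  = \sum_(i < k) tilde C ord_max (lift ord_max i) * cofactor (tilde C) ord_max (lift ord_max i).
  by apply: eq_bigr => i _; rewrite tilde_liftr ec.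
rewrite tilde_mm -ec -addrA; congr (_ + _).
rewrite /cofactor addnn -mul2n exprM sqrrN !expr1n mul1r.
have -> : row' ord_max (col' ord_max C) = subZ C by [].
by rewrite mulrBl addrC subrK.
Qed.

Lemma modn3 (n : nat) : (n %% 4 = 3)%N -> modz n%:Z 4 = 3.
Proof. by move=> h; rewrite modz_nat h. Qed.

Section Main.
Variables (n r : nat) (M : 'M[int]_r).
Hypotheses (n4 : (n %% 4 = 3)%N) (n3 : (3 < n)%N) (r1 : (1 <= r)%N).
Hypothesis hM : inCm n M.
Hypothesis dM : 0 < \det (tilde M).

Definition ext k (G : 'M[int]_k.+1) : 'M[int]_k.+2 := \matrix_(i, j)
  match unlift ord_max i, unlift ord_max j with
  | Some a, Some b => G a b
  | Some a, None => tilde G a ord_max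
  | None, Some b => tilde G ord_max b
  | None, None => n%:Z
  end.

Lemma ext_ll k (G : 'M[int]_k.+1) a b : ext G (lift ord_max a) (lift ord_max b) = G a b.
Proof. by rewrite mxE !liftK. Qed.
Lemma ext_lm k (G : 'M[int]_k.+1) a : ext G (lift ord_max a) ord_max = tilde G a ord_max.
Proof. by rewrite mxE liftK unlift_none. Qed.
Lemma ext_ml k (G : 'M[int]_k.+1) b : ext G ord_max (lift ord_max b) = tilde G ord_max b.
Proof. by rewrite mxE liftK unlift_none. Qed.
Lemma ext_mm k (G : 'M[int]_k.+1) : ext G ord_max ord_max = n%:Z.
Proof. by rewrite mxE unlift_none. Qed.

Lemma subZ_ext k (G : 'M[int]_k.+1) : subZ (ext G) = G.
Proof. by apply/matrixP => a b; rewrite subZE ext_ll. Qed.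

Lemma ext_sym k (G : 'M[int]_k.+1) : (forall i j, G i j = G j i) ->
  forall i j, ext G i j = ext G j i.
Proof.
move=> h i j.
case: (unliftP ord_max i) => [a|] ->; case: (unliftP ord_max j) => [b|] ->;
  rewrite ?ext_ll ?ext_lm ?ext_ml ?ext_mm //; exact: tilde_sym.
Qed.

Lemma pd_tilde_of k (C : 'M[int]_k.+1) : inCm n C -> 0 < \det (tilde C) -> posdef (tilde C).
Proof.
case=> /symP sC pC _ _ dC; apply/posdefE; apply: pd_of_det.
- by apply: rmx_sym; exact: tilde_sym.
- rewrite -rmx_sub subZ_tilde rmx_sub; apply: pd_sub => //; exact: rmx_sym.
- by rewrite det_rmx ltr0z.
Qed.

Lemma det_pos k (C : 'M[int]_k) : (forall i j, C i j = C j i) -> posdef C -> 0 < \det C.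
Proof.
move=> sC /posdefE pC; have := pd_det (rmx_sym sC) pC.
by rewrite det_rmx ltr0z.
Qed.

Lemma inEm_sub k (E : 'M[int]_k.+1) : inEm n M E -> inEm n M (subZ E).
Proof.
case=> [[/symP sE pE dE mE] lE]; split; first split.
- by apply/matrixP => i j; rewrite mxE !subZE sE.
- apply/posdefE; rewrite rmx_sub; apply: pd_sub => //; exact: rmx_sym.
- by move=> i; rewrite subZE dE.
- by move=> i j; rewrite subZE mE.
- move=> i j i' j' hi hj; rewrite subZE; apply: lE.
  + by rewrite hi /= /bump leqNgt ltn_ord.
  + by rewrite hj /= /bump leqNgt ltn_ord.
Qed.

Lemma ext_good k (G : 'M[int]_k.+1) : (r <= k.+1)%N -> inEm n M G ->
  posdef (tilde G) -> inEm n M (ext G) /\ posdef (tilde (ext G)).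
Proof.
move=> rk [[/symP sG pG dG mG] lG] ptG.
have sE := ext_sym sG.
have stE : forall i j, tilde (ext G) i j = tilde (ext G) j i by exact: tilde_sym.
have ptE : posdef (tilde (ext G)).
  apply/posdefE; apply: (@pd_ext _ _ _ (rmx (tilde G)) (n%:R - 3)).
  - exact: rmx_sym.
  - by apply: rmx_sym; exact: tilde_sym.
  - by move=> a b; rewrite !rmxE tilde_liftl ext_ll tilde_liftl.
  - by move=> a; rewrite !rmxE tilde_liftl ext_lm tilde_liftl.
  - by move=> a; rewrite !rmxE tilde_liftl ext_ll tilde_liftl.
  - by rewrite !rmxE tilde_liftl ext_lm.
  - by rewrite !rmxE !tilde_mm.
  - by rewrite !rmxE tilde_liftl ext_ll tilde_mm dG addrC subrK.
  - exact/posdefE.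
  - by rewrite subr_gt0 ltr_nat.
have dtE : 0 < \det (tilde (ext G)) := det_pos stE ptE.
have dGp : 0 < \det G := det_pos sG pG.
have pE : posdef (ext G).
  apply/posdefE; apply: pd_of_det.
  - exact: rmx_sym.
  - by rewrite -rmx_sub subZ_ext; exact/posdefE.
  - rewrite det_rmx ltr0z det_tilde subZ_ext ext_mm.
    apply: addr_gt0 => //; apply: mulr_gt0 => //.
    by rewrite subr_gt0 ltz_nat.
have liftv : forall (a : 'I_k.+1), val (lift ord_max a) = val a.
  by move=> a; rewrite /= /bump leqNgt ltn_ord.
have m3 : forall x : int, x = 3 -> modz x 4 = modz n%:Z 4.
  by move=> x ->; rewrite modn3.
split=> //; split; first split.
- by apply/matrixP => i j; rewrite mxE sE.
- exact: pE.
- move=> i; case: (unliftP ord_max i) => [a|] ->; by rewrite ?ext_ll ?ext_mm ?dG.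
- move=> i j.
  case: (unliftP ord_max i) => [a|] ->; case: (unliftP ord_max j) => [b|] ->;
    rewrite ?ext_ll ?ext_lm ?ext_ml ?ext_mm //.
  + case: (unliftP ord_max a) => [a'|] ->; by rewrite ?tilde_liftl ?tilde_mm ?mG ?m3.
  + case: (unliftP ord_max b) => [b'|] ->; by rewrite ?tilde_liftr ?tilde_mm ?mG ?m3.
- move=> i j i' j' hi hj.
  case: (unliftP ord_max i') hi => [a|] -> hi; last first.
    by have := ltn_ord i; rewrite hi /=; move=> h; have := leq_trans h rk; rewrite ltnn.
  case: (unliftP ord_max j') hj => [b|] -> hj; last first.
    by have := ltn_ord j; rewrite hj /=; move=> h; have := leq_trans h rk; rewrite ltnn.
  by rewrite ext_ll; apply: lG; rewrite -liftv.
Qed.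

End Main.

Lemma base n r (M : 'M[int]_r) k (E : 'M[int]_k.+1) : r = k.+1 -> inCm n M ->
  0 < \det (tilde M) -> leading M E -> inCm n E -> posdef (tilde E).
Proof.
move=> rk; subst r => hM dM lE hE.
have EM : E = M by apply/matrixP => i j; exact: lE.
by rewrite EM; exact: (pd_tilde_of hM dM).
Qed.

From Stdlib Require Import Classical.

Lemma improve n r (M : 'M[int]_r) : (n %% 4 = 3)%N -> (3 < n)%N -> (1 <= r)%N ->
  inCm n M -> 0 < \det (tilde M) ->
  forall k (E : 'M[int]_k.+1), (r <= k.+1)%N -> inEm n M E -> ~ posdef (tilde E) ->
  exists E' : 'M[int]_k.+1, inEm n M E' /\ posdef (tilde E') /\ \det E < \det E'.
Proof.
move=> n4 n3 r1 hM dM; elim=> [|k IH] E rk hE ntE.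
  exfalso; apply: ntE; apply: (base _ hM dM hE.2 hE.1).
  by apply/eqP; rewrite eqn_leq rk r1.
case: (ltnP k.+1 r) => hr.
  exfalso; apply: ntE; apply: (base _ hM dM hE.2 hE.1).
  by apply/eqP; rewrite eqn_leq rk hr.
have hF := inEm_sub hE.
have [F' [hF' [ptF' dF']]] : exists F' : 'M[int]_k.+1, inEm n M F' /\ posdef (tilde F') /\ \det (subZ E) <= \det F'.
  case: (classic (posdef (tilde (subZ E)))) => h; first by exists (subZ E).
  have [F' [h1 [h2 h3]]] := IH _ hr hF h.
  by exists F'; split=> //; split=> //; exact: ltW.
have [hE' ptE'] := ext_good n4 n3 hr hF' ptF'.
exists (ext n F'); split=> //; split=> //.
have dtE : \det (tilde E) <= 0.
  by rewrite leNgt; apply/negP => h; apply: ntE; exact: (pd_tilde_of hE.1 h).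
case: hE => [[/symP sE pE dE mE] lE].
case: hF => [[/symP sF pF _ _] _].
case: hF' => [[/symP sF' pF' _ _] _].
have c0 : 0 < n%:Z - 3 by rewrite subr_gt0 ltz_nat.
have dtE' : 0 < \det (tilde (ext n F')) by apply: det_pos ptE'; apply: tilde_sym; exact: ext_sym.
have dFp : 0 < \det (subZ E) := det_pos sF pF.
have m1 : (n%:Z - 3) * \det (subZ E) <= (n%:Z - 3) * \det F' by rewrite ler_pM2l.
rewrite (det_tilde E) (det_tilde (ext n F')) subZ_ext ext_mm dE.
lia.
Qed.

Theorem corollary1 (n r m : nat) (M : 'M[int]_r) (Estar : 'M[int]_m) :
  (n %% 4 = 3)%N -> (3 < n)%N ->
  (1 <= r)%N -> (r <= m)%N ->
  inCm n M ->
  0 < \det (tilde M) ->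
  inEm n M Estar ->
  (forall E : 'M[int]_m, inEm n M E -> \det E <= \det Estar) ->
  0 < \det (tilde Estar).
Proof.
move=> n4 n3 r1 rm hM dM hE hmax.
case: m Estar rm hE hmax => [|k] Estar rm hE hmax.
  by have := leq_trans r1 rm.
rewrite ltNge; apply/negP => hle.
have ntE : ~ posdef (tilde Estar).
  move=> p; case: hE => [[/symP sE _ _ _] _].
  by have := det_pos (tilde_sym sE) p; rewrite ltNge hle.
have [E' [hE' [_ lt]]] := improve n4 n3 r1 hM dM rm hE ntE.
by have := hmax _ hE'; rewrite leNgt lt.
Qed.
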